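(* Let $m$ be even, $N,n\ge1$ integers and $0<\varepsilon\le1$. Fix $x,y\in[m]^N$. For any two sequences $z,\bar z\in[m]^n$ such that both $(x,y,z)$ and $(x,y,\bar z)$ belong to the event $B$ (i.e., no symbol appears more than once in the third sequence, and no symbol of the third sequence appears in $x$ or in $y$), we have $$\frac{1}{|K_m|}\sum_{\omega\in K_m}\Pr_{(u,q^\omega,u)}(x,y,z)=\frac{1}{|K_m|}\sum_{\omega\in K_m}\Pr_{(u,q^\omega,u)}(x,y,\bar z),$$ $$\frac{1}{|K_m|}\sum_{\omega\in K_m}\Pr_{(u,q^\omega,q^\omega)}(x,y,z)=\frac{1}{|K_m|}\sum_{\omega\in K_m}\Pr_{(u,q^\omega,q^\omega)}(x,y,\bar z).$$
   Context: Let $u$ be the uniform distribution on $[m]=\{1,\dots,m\}$. Let $K_m$ be the collection of all subsets of $[m]$ of cardinality $m/2$. For $\omega\in K_m$ let $q^\omega$ be the distribution on $[m]$ with $q^\omega_j=(1+\varepsilon)/m$ for $j\in\omega$ and $q^\omega_j=(1-\varepsilon)/m$ for $j\notin\omega$. For distributions $a,b,c$ on $[m]$, $\Pr_{(a,b,c)}(x,y,z)=\prod_{i=1}^N a_{x_i}\prod_{i=1}^N b_{y_i}\prod_{i=1}^n c_{z_i}$ is the probability that $(X,Y,Z)=(x,y,z)$ when $X$ ($N$ symbols) is i.i.d. $a$, $Y$ ($N$ symbols) is i.i.d. $b$, $Z$ ($n$ symbols) is i.i.d. $c$, all independent. *)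

(* Defs.v *)
From mathcomp Require Import all_boot all_order all_algebra.
Set Implicit Arguments. Unset Strict Implicit. Unset Printing Implicit Defensive.
Import Order.TTheory GRing.Theory Num.Theory.
Local Open Scope ring_scope.

(* [m] is modelled by 'I_m (elements 0..m-1 instead of 1..m). *)

Definition unif {R : realFieldType} (m : nat) : 'I_m -> R := fun _ => 1 / m%:R.

Definition Km (m : nat) : {set {set 'I_m}} := [set w : {set 'I_m} | #|w| == m./2].

Definition qw {R : realFieldType} (m : nat) (eps : R) (w : {set 'I_m}) : 'I_m -> R :=
  fun j => if j \in w then (1 + eps) / m%:R else (1 - eps) / m%:R.

Definition Pr3 {R : realFieldType} (m N n : nat) (a b c : 'I_m -> R)
  (x y : N.-tuple 'I_m) (z : n.-tuple 'I_m) : R :=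
  (\prod_(i < N) a (tnth x i)) * (\prod_(i < N) b (tnth y i)) * (\prod_(i < n) c (tnth z i)).

Definition eventB (m N n : nat) (x y : N.-tuple 'I_m) (z : n.-tuple 'I_m) : bool :=
  uniq z && all (fun s => (s \notin x) && (s \notin y)) z.
Arguments unif {R} m _.

(* Main.v *)
Require Import Defs.
From mathcomp Require Import all_boot all_order all_algebra all_fingroup.
Import Order.TTheory GRing.Theory Num.Theory.
Local Open Scope ring_scope.

Lemma ext_perm (T : finType) (s t : seq T) (C : {set T}) :
  uniq s -> uniq t -> size s = size t ->
  all (fun a => a \notin C) s -> all (fun a => a \notin C) t ->
  exists sg : {perm T}, map sg s = t /\ forall c, c \in C -> sg c = c.
Proof.
move: {2}(size s) (erefl (size s)) => k; elim: k s t C => [|k IH] [|a s] [|b t] C //=.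
  by move=> *; exists 1%g; split => // c _; rewrite perm1.
move=> [hk].
move=> /andP[aS us] /andP[bt ut] [hs] /andP[aC sC] /andP[bC tC].
pose tau := tperm a b.
have H1 : size [seq tau i | i <- s] = k by rewrite size_map hk.
have H2 : uniq [seq tau i | i <- s] by rewrite map_inj_uniq //; apply: perm_inj.
have H4 : size [seq tau i | i <- s] = size t by rewrite size_map hs.
have H5 : all (fun a => a \notin b |: C) [seq tau i | i <- s].
  apply/allP => j /mapP[i iS ->]; rewrite in_setU1 negb_or.
  have iC : i \notin C by move/allP: sC => /(_ i iS).
  apply/andP; split.
    rewrite -{1}(tpermL a b) (inj_eq perm_inj).
    by apply/eqP => E; move: aS; rewrite -E iS.
  by rewrite /tau; case: tpermP => *.
have H6 : all (fun a => a \notin b |: C) t.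
  apply/allP => j jt; rewrite in_setU1 negb_or.
  have jC : j \notin C by move/allP: tC => /(_ j jt).
  by rewrite jC andbT; apply/eqP => E; move: bt; rewrite -E jt.
have [sg' [hm hf]] := IH _ t (b |: C) H1 H2 ut H4 H5 H6.
exists (tau * sg')%g; split.
  rewrite permM tpermL hf ?setU11 //; congr (_ :: _).
  rewrite -hm -map_comp; apply: eq_map => i /=; by rewrite permM.
move=> c cC; rewrite permM tpermD ?hf ?in_setU1 ?cC ?orbT //.
  by apply/eqP => E; move: aC; rewrite E cC.
by apply/eqP => E; move: bC; rewrite E cC.
Qed.

Lemma qw_perm (R : realFieldType) (m : nat) (eps : R) (sg : {perm 'I_m})
  (w : {set 'I_m}) (j : 'I_m) : qw eps (sg @: w) (sg j) = qw eps w j.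
Proof. by rewrite /qw mem_imset //; apply: perm_inj. Qed.

Theorem lemma3 (R : realFieldType) (m N n : nat) (eps : R) :
  ~~ odd m -> (1 <= N)%N -> (1 <= n)%N -> 0 < eps -> eps <= 1 ->
  forall (x y : N.-tuple 'I_m) (z zb : n.-tuple 'I_m),
  eventB x y z -> eventB x y zb ->
  (#|Km m|%:R^-1 * \sum_(w in Km m) Pr3 (unif m) (qw eps w) (unif m) x y z
   = #|Km m|%:R^-1 * \sum_(w in Km m) Pr3 (unif m) (qw eps w) (unif m) x y zb)
  /\
  (#|Km m|%:R^-1 * \sum_(w in Km m) Pr3 (unif m) (qw eps w) (qw eps w) x y z
   = #|Km m|%:R^-1 * \sum_(w in Km m) Pr3 (unif m) (qw eps w) (qw eps w) x y zb).
Proof.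
move=> _ _ _ _ _ x y z zb /andP[uz az] /andP[uzb azb]; split.
  by congr (_ * _); apply: eq_bigr => w _; rewrite /Pr3 /unif.
pose C := [set c | (c \in x) || (c \in y)].
have [|||sg [hm hf]] := @ext_perm _ (val z) (val zb) C uz uzb.
- by rewrite !size_tuple.
- apply/allP => c /(allP az); rewrite inE negb_or //.
- apply/allP => c /(allP azb); rewrite inE negb_or //.
have hzb : forall i, tnth zb i = sg (tnth z i).
  by move=> i; rewrite (tnth_nth (tnth z i) zb) -hm (nth_map (tnth z i)) ?size_tuple // -tnth_nth.
have hy : forall i, sg (tnth y i) = tnth y i.
  by move=> i; apply: hf; rewrite inE mem_tnth orbT.
congr (_ * _).
rewrite [RHS](reindex_inj (h := fun w : {set 'I_m} => sg @: w)); last first.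
  by apply: imset_inj; apply: perm_inj.
apply: eq_big => w.
  by rewrite !inE card_imset //; apply: perm_inj.
move=> _; rewrite /Pr3; congr (_ * _ * _).
  by apply: eq_bigr => i _; rewrite -[in RHS]hy qw_perm.
by apply: eq_bigr => i _; rewrite hzb qw_perm.
Qed.
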